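(* Let $n\ge1$, $\mathcal{X}$ the simplex in $\mathbb{R}^{n+1}$, $\theta$ a kernel, $\Phi$ a Lipschitz continuous smooth function on an open neighborhood of $\mathcal{X}$, and $\eta>0$. Let $x(t)$ be an interior solution of the inertial dynamics (ID) defined for all $t\ge0$, let $x^\omega$ be an $\omega$-limit point of $x(t)$ (i.e. $x(t_n)\to x^\omega$ for some $t_n\to\infty$), and let $U$ be a neighborhood of $x^\omega$ in $\mathcal{X}$. Then for every $T>0$ there exists an interval $J$ of length at least $T$ such that $x(t)\in U$ for all $t\in J$.
   Context: $\mathcal{X}=\{x\in\mathbb{R}^{n+1}:x_\alpha\ge0,\sum_\alpha x_\alpha=1\}$ with relative interior $\mathcal{X}^\circ$. A kernel is a $C^\infty$ function $\theta:[0,\infty)\to\mathbb{R}\cup\{+\infty\}$ with $\theta(x)<\infty$ for $x>0$, $\lim_{x\to0^+}\theta'(x)=-\infty$, $\theta''>0$, $\theta'''<0$ on $(0,\infty)$. With $\theta''_\alpha=\theta''(x_\alpha)$, $\theta'''_\alpha=\theta'''(x_\alpha)$, $\Theta''=(\sum_\beta1/\theta''_\beta)^{-1}$, $v_\alpha=\partial\Phi/\partial x_\alpha$, the inertial dynamics (ID) on $\mathcal{X}^\circ$ are $$\ddot x_\alpha=\frac{1}{\theta''_\alpha}\Big[v_\alpha-\sum_{\beta}\frac{\Theta''}{\theta''_\beta}v_\beta\Big]-\frac{1}{2\theta''_\alpha}\Big[\theta'''_\alpha\dot x_\alpha^2-\sum_\beta\frac{\Theta''}{\theta''_\beta}\theta'''_\beta\dot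 x_\beta^2\Big]-\eta\dot x_\alpha.$$ *)

(* Defs.v *)
From HB Require Import structures.
From mathcomp Require Import all_boot all_order all_algebra.
From mathcomp Require Import all_classical all_reals all_analysis.
Set Implicit Arguments. Unset Strict Implicit. Unset Printing Implicit Defensive.
Import Order.TTheory GRing.Theory Num.Theory.
Import numFieldNormedType.Exports.
Local Open Scope classical_set_scope.
Local Open Scope ring_scope.

Section Defs.
Variable R : realType.
Variable n : nat.
Notation vec := 'rV[R]_(n.+1).

Definition simplex : set vec :=
  [set x | (forall a, 0 <= x ord0 a) /\ \sum_a x ord0 a = 1].
Definition simplex_int : set vec :=
  [set x | (forall a, 0 < x ord0 a) /\ \sum_a x ord0 a = 1].

Definition dern (k : nat) (f : R -> R) : R -> R := iter k (@derive1 R R) f.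

(* kernel: theta restricted to (0,oo) is real valued and C^oo there; its value
   theta0 at 0 lies in R u {+oo} and theta is continuous at 0 from the right;
   theta' -> -oo at 0+, theta'' > 0, theta''' < 0 on (0,oo). *)
Definition is_kernel (theta : R -> R) (theta0 : \bar R) : Prop :=
  [/\ theta0 != -oo%E,
      (forall k x, 0 < x -> derivable (dern k theta) x 1),
      (fun x => (theta x)%:E) @ 0^'+ --> theta0,
      dern 1 theta @ 0^'+ --> -oo &
      (forall x, 0 < x -> 0 < dern 2 theta x) /\
      (forall x, 0 < x -> dern 3 theta x < 0)].

Definition coord_partial (a : 'I_n.+1) (f : vec -> R) : vec -> R :=
  fun y => 'D_(delta_mx ord0 a) f y.

Definition iter_partial (l : seq 'I_n.+1) (f : vec -> R) : vec -> R :=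
  foldr coord_partial f l.

Definition Smooth_on_set (O : set vec) (f : vec -> R) : Prop :=
  (forall l a y, O y -> derivable (iter_partial l f) y (delta_mx ord0 a)) /\
  (forall l, {within O, continuous (iter_partial l f)}).

Definition Lipschitz_on_set (O : set vec) (f : vec -> R) : Prop :=
  exists L : R, forall y z, O y -> O z -> `|f y - f z| <= L * `|y - z|.

Definition ID_rhs (theta : R -> R) (Phi : vec -> R) (eta : R)
  (x xd : vec) (a : 'I_n.+1) : R :=
  let th2 := fun b => dern 2 theta (x ord0 b) in
  let th3 := fun b => dern 3 theta (x ord0 b) in
  let Th2 := (\sum_b (th2 b)^-1)^-1 in
  let v := fun b => coord_partial b Phi x in
  (th2 a)^-1 * (v a - \sum_b Th2 / th2 b * v b)
  - (2 * th2 a)^-1 * (th3 a * (xd ord0 a) ^+ 2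
                      - \sum_b Th2 / th2 b * th3 b * (xd ord0 b) ^+ 2)
  - eta * xd ord0 a.

Definition interior_ID_solution (theta : R -> R) (Phi : vec -> R) (eta : R)
  (x : R -> vec) : Prop :=
  (forall t, 0 <= t -> simplex_int (x t)) /\
  (forall t, 0 < t -> derivable x t 1) /\
  (forall t, 0 < t -> derivable (derive1 x) t 1) /\
  (forall t a, 0 < t ->
     (derive1 (derive1 x) t) ord0 a = ID_rhs theta Phi eta (x t) (derive1 x t) a).

Definition omega_limit_point (x : R -> vec) (xw : vec) : Prop :=
  exists tn : nat -> R, tn @ \oo --> +oo /\ (x \o tn) @ \oo --> xw.

Definition nbhs_in_simplex (xw : vec) (U : set vec) : Prop :=
  exists V, nbhs xw V /\ V `&` simplex `<=` U.

End Defs.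

(* Main.v *)
Require Import Defs.
From HB Require Import structures.
From mathcomp Require Import all_boot all_order all_algebra.
From mathcomp Require Import all_classical all_reals all_analysis.
From mathcomp Require Import ring lra.
Set Implicit Arguments. Unset Strict Implicit. Unset Printing Implicit Defensive.
Import Order.TTheory GRing.Theory Num.Theory.
Import numFieldNormedType.Exports.
Local Open Scope classical_set_scope.
Local Open Scope ring_scope.
Section S.
Variable R : realType.
Variable n : nat.
Notation vec := 'rV[R]_(n.+1).

Lemma derive_line (Phi : vec -> R) (w v : vec) (r : R) :
  derivable Phi (w + r *: v) v ->
  is_derive r 1 (fun s => Phi (w + s *: v)) ('D_v Phi (w + r *: v)).
Proof.
move=> dP.
have E : (fun h : R => h^-1 *: (((fun s => Phi (w + s *: v)) \o shift r) (h *: 1) - Phi (w + r *: v)))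
   = (fun h : R => h^-1 *: ((Phi \o shift (w + r *: v)) (h *: v) - Phi (w + r *: v))).
  apply/funext => h /=; congr (_ *: (Phi _ - _)).
  by rewrite /shift /= scaler1 scalerDl addrCA.
split; first by rewrite /derivable E.
by rewrite /derive E.
Qed.

Lemma step_mvt (Phi : vec -> R) (w v : vec) (s : R) :
  (forall r, `|r| <= `|s| -> derivable Phi (w + r *: v) v) ->
  exists2 c, `|c| <= `|s| & Phi (w + s *: v) - Phi w = s * 'D_v Phi (w + c *: v).
Proof.
move=> dP.
pose g := fun r : R => Phi (w + r *: v).
have gd (r : R) : `|r| <= `|s| -> is_derive r (1 : R) g ('D_v Phi (w + r *: v)).
  by move=> hr; apply: derive_line; apply: dP.
have gc a b : `|a| <= `|s| -> `|b| <= `|s| -> {within `[a, b], continuous g}.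
  move=> ha hb; apply: continuous_in_subspaceT => r; rewrite inE /= in_itv /= => /andP[ar rb].
  have hr : `|r| <= `|s|.
    rewrite ler_norml; rewrite !ler_norml in ha hb.
    case/andP: ha => ha1 ha2; case/andP: hb => hb1 hb2.
    apply/andP; split; lra.
  have := gd r hr => -[dg _].
  exact/differentiable_continuous/derivable1_diffP.
have g0 : g 0 = Phi w by rewrite /g scale0r addr0.
case: (leP 0 s) => s0.
  have [||c cin E] := @MVT_segment R g (fun r => 'D_v Phi (w + r *: v)) 0 s s0.
  - move=> r; rewrite in_itv /= => /andP[r0 rs]; apply: gd.
    rewrite !ger0_norm; lra.
  - apply: gc; rewrite ?normr0 //.
  exists c; last by rewrite -g0 -/(g s) E subr0 mulrC.
  move: cin; rewrite in_itv /= => /andP[c0 cs]; rewrite !ger0_norm; lra.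
have [||c cin E] := @MVT_segment R g (fun r => 'D_v Phi (w + r *: v)) s 0 (ltW s0).
- move=> r; rewrite in_itv /= => /andP[r0 rs]; apply: gd.
  rewrite !ltr0_norm; lra.
- apply: gc; rewrite ?normr0 //.
exists c; last first.
  have -> : Phi w = g 0 by [].
  have -> : Phi (w + s *: v) = g s by [].
  have -> : g s - g 0 = - (g 0 - g s) by ring.
  by rewrite E; ring.
move: cin; rewrite in_itv /= => /andP[c0 cs]; rewrite ler0_norm // ltr0_norm //; lra.
Qed.

Notation e a := (delta_mx 0 a : vec).

Lemma sum_delta_entry (P : pred 'I_n.+1) (c : 'I_n.+1 -> R) k :
  (\sum_(i | P i) c i *: e i) 0 k = if P k then c k else 0.
Proof.
rewrite summxE; under eq_bigr do rewrite !mxE eqxx /=.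
rewrite big_mkcond /= (bigD1 k) //= big1 ?addr0 => [|i ik].
  by rewrite eqxx; case: (P k); rewrite ?mulr1.
by rewrite eq_sym (negbTE ik); case: (P i); rewrite ?mulr0.
Qed.

Lemma entry_le (d : vec) k : `|d 0 k| <= `|d|.
Proof.
rewrite [leRHS]/Num.Def.normr/= mx_normrE.
by apply: le_trans; last exact: (le_bigmax _ _ (0, k)).
Qed.

Lemma sum_split_last (V : zmodType) (F : 'I_n.+1 -> V) j (hj : (j < n.+1)%N) :
  \sum_(k < n.+1 | (k < j.+1)%N) F k = \sum_(k < n.+1 | (k < j)%N) F k + F (Ordinal hj).
Proof.
rewrite (bigD1 (Ordinal hj)) //= addrC; congr (_ + _).
apply: eq_bigl => k; rewrite ltnS leq_eqVlt -val_eqE /=.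
by case: (ltngtP k j).
Qed.

Lemma taylor1 (Phi : vec -> R) (y : vec) (eps delta : R) :
  (forall z a, `|z - y| < delta -> derivable Phi z (e a)) ->
  (forall z a, `|z - y| < delta -> `|'D_(e a) Phi z - 'D_(e a) Phi y| <= eps) ->
  forall z, `|z - y| < delta ->
  `|Phi z - Phi y - \sum_a (z - y) 0 a * 'D_(e a) Phi y|
     <= eps * \sum_a `|(z - y) 0 a|.
Proof.
move=> dP cP z zy.
set d := z - y.
pose p (j : nat) := y + \sum_(k < n.+1 | (k < j)%N) d 0 k *: e k.
have pnorm j (hj : (j < n.+1)%N) r : `|r| <= `|d 0 (Ordinal hj)| ->
    `|p j + r *: e (Ordinal hj) - y| < delta.
  move=> hr; apply: le_lt_trans zy.
  have -> : p j + r *: e (Ordinal hj) - y =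
     \sum_(k < n.+1 | (k < j)%N) d 0 k *: e k + r *: e (Ordinal hj).
    by rewrite /p addrAC (addrC y) addrK.
  rewrite [leLHS]/Num.Def.normr/= mx_normrE.
  apply: bigmax_le => // -[i k] _ /=; rewrite [i]ord1.
  rewrite !mxE sum_delta_entry eqxx /=.
  case: (eqVneq (Ordinal hj) k) => [<-|kj] /=.
    rewrite ltnn mulr1 add0r; apply: le_trans hr _; exact: entry_le.
  rewrite mulr0 addr0; case: ifP => _; rewrite ?normr0 //; exact: entry_le.
have claim : forall j, (j <= n.+1)%N ->
  `|Phi (p j) - Phi y - \sum_(k < n.+1 | (k < j)%N) d 0 k * 'D_(e k) Phi y|
     <= eps * \sum_(k < n.+1 | (k < j)%N) `|d 0 k|.
  elim => [_|j IH hj].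
    rewrite /p !big_pred0 // addr0 subrr subr0 normr0 mulr0 //.
  have hj' : (j < n.+1)%N by [].
  rewrite (sum_split_last (fun k => d 0 k * 'D_(e k) Phi y) hj') (sum_split_last (fun k => `|d 0 k|) hj').
  have [c hc E] := @step_mvt Phi (p j) (e (Ordinal hj')) (d 0 (Ordinal hj'))
     (fun r hr => dP _ _ (pnorm _ hj' r hr)).
  have -> : p j.+1 = p j + d 0 (Ordinal hj') *: e (Ordinal hj').
    by rewrite /p (sum_split_last _ hj') addrA.
  have -> : Phi (p j + d 0 (Ordinal hj') *: e (Ordinal hj')) - Phi y -
     (\sum_(k < n.+1 | (k < j)%N) d 0 k * 'D_(e k) Phi y +
        d 0 (Ordinal hj') * 'D_(e (Ordinal hj')) Phi y) =
     (Phi (p j) - Phi y - \sum_(k < n.+1 | (k < j)%N) d 0 k * 'D_(e k) Phi y)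
     + d 0 (Ordinal hj') * ('D_(e (Ordinal hj')) Phi (p j + c *: e (Ordinal hj'))
          - 'D_(e (Ordinal hj')) Phi y).
    have -> : Phi (p j + d 0 (Ordinal hj') *: e (Ordinal hj')) =
       Phi (p j) + d 0 (Ordinal hj') * 'D_(e (Ordinal hj')) Phi (p j + c *: e (Ordinal hj')).
      by rewrite -E; ring.
    ring.
  rewrite [eps * _]mulrDr; apply: le_trans (ler_normD _ _) _; apply: lerD.
    by apply: IH; apply: ltnW.
  rewrite normrM mulrC; apply: ler_wpM2r => //.
  by apply: cP; apply: pnorm.
have := claim n.+1 (leqnn _).
have F : forall (V : zmodType) (G : 'I_n.+1 -> V), \sum_(k < n.+1 | (k < n.+1)%N) G k = \sum_k G k.
  by move=> V G; apply: eq_bigl => k; rewrite ltn_ord.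
rewrite !F.
suff -> : p n.+1 = z by [].
by rewrite /p F -row_sum_delta /d addrC subrK.
Qed.

Lemma chain_Phi (Phi : vec -> R) (O : set vec) (x : R -> vec) (t : R) :
  open O -> O (x t) ->
  (forall z a, O z -> derivable Phi z (e a)) ->
  (forall a, {in O, continuous (fun z => 'D_(e a) Phi z)}) ->
  derivable x t 1 ->
  is_derive t 1 (Phi \o x) (\sum_a ('D_1 x t) 0 a * 'D_(e a) Phi (x t)).
Proof.
move=> oO Oy dP cP dx.
set y := x t; set xd := 'D_1 x t.
set L := \sum_a xd 0 a * 'D_(e a) Phi y.
set P := \sum_a `|'D_(e a) Phi y|.
set S := \sum_a `|xd 0 a|.
have P0 : 0 <= P by apply: sumr_ge0.
have S0 : 0 <= S by apply: sumr_ge0.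
have key : (fun h => h^-1 *: ((Phi \o x \o shift t) (h *: 1) - Phi (x t))) @ (0:R)^' --> L.
  apply/cvgrPdist_le => eps0 eps00.
  set eps := eps0 / (2 * (S + n.+1%:R)).
  have eps_gt0 : 0 < eps by apply: divr_gt0 => //; apply: mulr_gt0 => //; apply: ltr_wpDl.
  set r := Num.min 1 (eps0 / (2 * (P + 1))).
  have r_gt0 : 0 < r.
    by rewrite lt_min ltr01 /=; apply: divr_gt0 => //; apply: mulr_gt0 => //; apply: ltr_wpDl.
  have r1 : r <= 1 by rewrite ge_min lexx.
  have r2 : r <= eps0 / (2 * (P + 1)) by rewrite ge_min lexx orbT.
  have nearO : \forall z \near y, O z /\ forall a, `|'D_(e a) Phi y - 'D_(e a) Phi z| <= eps.
    near=> z; split.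
      by near: z; apply: open_nbhs_nbhs; split.
    near: z; apply: filter_forall => a.
    have ca := cP a y (mem_set Oy).
    by move/cvgrPdist_le: ca => /(_ eps eps_gt0).
  move/nbhs_ballP: nearO => -[delta /= delta0 Hd].
  have Hd' z : `|z - y| < delta -> O z /\ forall a, `|'D_(e a) Phi z - 'D_(e a) Phi y| <= eps.
    move=> zy; have /Hd [Oz H] : ball y delta z by rewrite -ball_normE /ball_ /= distrC.
    by split => // a; rewrite distrC.
  have Ty := @taylor1 Phi y eps delta
    (fun z a zy => dP z a (Hd' z zy).1) (fun z a zy => (Hd' z zy).2 a).
  have dx' : (fun h => h^-1 *: ((x \o shift t) (h *: 1) - x t)) @ (0:R)^' --> xd := dx.
  move/cvgrPdist_le: dx' => /(_ r r_gt0) dxr.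
  have hsmall := @dnbhs0_lt R R^o (delta / (`|xd| + 1)) (divr_gt0 delta0 (ltr_wpDl (normr_ge0 _) ltr01)).
  near=> h.
  have hN0 : h != 0 by near: h; exact: nbhs_dnbhs_neq.
  have Dh : `|xd - h^-1 *: ((x \o shift t) (h *: 1) - x t)| <= r by near: h.
  have hs : `|h| < delta / (`|xd| + 1) by near: h.
  have hA : h%:A = h :> R by rewrite /GRing.scale /= mulr1.
  rewrite /= hA in Dh *.
  set z := x (h + t) in Dh *.
  set D := h^-1 *: (z - y) in Dh.
  have zyD : z - y = h *: D by rewrite /D scalerA mulfV // scale1r.
  have Dnorm : `|D| <= `|xd| + 1.
    rewrite -(subrK xd D) addrC; apply: le_trans (ler_normD _ _) _.
    by rewrite lerD // distrC (le_trans Dh r1).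
  have zy : `|z - y| < delta.
    rewrite zyD normrZ; apply: le_lt_trans (ler_wpM2l (normr_ge0 _) Dnorm) _.
    by rewrite -ltr_pdivlMr // ltr_wpDl.
  have Tz := Ty z zy.
  set Rm := Phi z - Phi y - \sum_a (z - y) 0 a * 'D_(e a) Phi y in Tz.
  have Dentry a : `|xd 0 a - D 0 a| <= r.
    apply: le_trans Dh; have := entry_le (xd - D) a; rewrite !mxE; exact.
  have zya a : (z - y) 0 a = h * D 0 a by rewrite zyD mxE.
  have SD0 : 0 < S + n.+1%:R by apply: ltr_wpDl.
  have eqn : L - h^-1 *: (Phi z - Phi y) =
      \sum_a (xd 0 a - D 0 a) * 'D_(e a) Phi y - h^-1 * Rm.
    rewrite /Rm.
    have -> : \sum_a (z - y) 0 a * 'D_(e a) Phi y = h * \sum_a D 0 a * 'D_(e a) Phi y.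
      by rewrite mulr_sumr; apply: eq_bigr => a _; rewrite zya mulrA.
    set SD := \sum_a D 0 a * _.
    have -> : \sum_a (xd 0 a - D 0 a) * 'D_(e a) Phi y = L - SD.
      by rewrite /L /SD -sumrB; apply: eq_bigr => a _; ring.
    change (h^-1 *: (Phi z - Phi y)) with (h^-1 * (Phi z - Phi y)).
    by field.
  rewrite eqn; apply: le_trans (ler_normB _ _) _.
  rewrite (splitr eps0); apply: lerD.
    apply: le_trans (ler_norm_sum _ _ _) _.
    apply: (@le_trans _ _ (\sum_a r * `|'D_(e a) Phi y|)).
      apply: ler_sum => a _; rewrite normrM; apply: ler_wpM2r => //; exact: Dentry.
    rewrite -mulr_sumr -/P.
    apply: le_trans (ler_wpM2r P0 r2) _.
    have -> : eps0 / (2 * (P + 1)) * P = eps0 / 2 * (P / (P + 1)).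
      by field; apply: lt0r_neq0; apply: ltr_wpDl.
    rewrite -[leRHS]mulr1; apply: ler_wpM2l; first by apply: divr_ge0 => //; apply: ltW.
    by rewrite ler_pdivrMr ?mul1r ?lerDl //; apply: ltr_wpDl.
  rewrite normrM normfV.
  apply: le_trans (ler_wpM2l _ Tz) _; first by rewrite invr_ge0.
  have -> : \sum_a `|(z - y) 0 a| = `|h| * \sum_a `|D 0 a|.
    by rewrite mulr_sumr; apply: eq_bigr => a _; rewrite zya normrM.
  rewrite mulrCA mulKf ?normr_eq0 //.
  apply: (@le_trans _ _ (eps * (S + n.+1%:R))); last first.
    rewrite /eps le_eqVlt; apply/orP; left; apply/eqP; field; have -> : 1 + n%:R = n.+1%:R :> R by rewrite addrC natr1.
    exact: lt0r_neq0.
  apply: ler_wpM2l; first exact: ltW.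
  apply: (@le_trans _ _ (\sum_a (`|xd 0 a| + 1))).
    apply: ler_sum => a _.
    rewrite -(subrK (xd 0 a) (D 0 a)) addrC; apply: le_trans (ler_normD _ _) _.
    by rewrite lerD // distrC (le_trans (Dentry a) r1).
  by rewrite big_split /= sumr_const card_ord.
split; first by apply/cvg_ex; exists L.
exact: cvg_lim key.
Unshelve. all: by end_near.
Qed.

Lemma comp_entry (f : R -> vec) (t : R) a :
  derivable f t 1 -> is_derive t 1 (fun s => f s ord0 a) (derive1 f t ord0 a).
Proof.
move=> df; have /derivable_mxP /(_ ord0 a) da := df.
split => //; by rewrite derive1E derive_mx // mxE.
Qed.
End S.

Lemma is_derive_ext (R : realType) (f g : R -> R) (x df : R) :
  (forall s, f s = g s) -> is_derive x 1 f df -> is_derive x 1 g df.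
Proof. by move=> fg; have -> : f = g by apply/funext. Qed.

Lemma is_derive_val (R : realType) (f : R -> R) (x df df' : R) :
  df = df' -> is_derive x 1 f df -> is_derive x 1 f df'.
Proof. by move=> ->. Qed.

Lemma alg_ID (R : realType) (c A B e xd : R) : c != 0 ->
  c * (c^-1 * A - (2 * c)^-1 * B - e * xd) = A - 2^-1 * B - e * (c * xd).
Proof. by move=> c0; field. Qed.

Lemma sum_alg (R : realType) n (Vl v th2 th3 : 'I_n -> R) (Av Sv eta : R) :
  \sum_a Vl a = 0 ->
  2^-1 * \sum_a (2 * Vl a * (v a - Av) - Vl a * (th3 a * Vl a ^+ 2 - Sv)
      - 2 * (eta * (th2 a * Vl a ^+ 2)) + th3 a * Vl a ^+ 3)
  - \sum_a Vl a * v a = - eta * \sum_a th2 a * Vl a ^+ 2.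
Proof.
move=> V0.
rewrite (eq_bigr (fun a => 2 * (Vl a * v a) + (Sv - 2 * Av) * Vl a
   - 2 * eta * (th2 a * Vl a ^+ 2))); last by move=> a _; ring.
rewrite sumrB big_split /= -!mulr_sumr V0; by field.
Qed.

Lemma near_pos (R : realType) (t : R) : 0 < t -> \forall s \near t, 0 < s.
Proof.
move=> t0; apply/nbhs_ballP; exists t => // s /=.
rewrite -ball_normE /ball_ /= => h.
have := ler_norm (t - s); lra.
Qed.

Lemma cont_from_derive (R : realType) (f : R -> R) (a b : R) :
  (forall s, s \in `[a, b] -> derivable f s 1) -> {within `[a, b], continuous f}.
Proof.
move=> df; apply: continuous_in_subspaceT => s; rewrite inE /= => hs.
exact/differentiable_continuous/derivable1_diffP/df.
Qed.

Lemma sum_alg' (R : realType) n (Vl v th2 th3 Ac : 'I_n -> R) (Av Sv eta : R) :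
  \sum_a Vl a = 0 ->
  (forall a, th2 a * Ac a = v a - Av - 2^-1 * (th3 a * Vl a ^+ 2 - Sv) - eta * (th2 a * Vl a)) ->
  2^-1 * \sum_a (th2 a * (2 * Vl a * Ac a) + Vl a ^+ 2 * (th3 a * Vl a)) - \sum_a Vl a * v a
  = - eta * \sum_a th2 a * Vl a ^+ 2.
Proof.
move=> V0 H.
rewrite (eq_bigr (fun a => 2 * Vl a * (v a - Av) - Vl a * (th3 a * Vl a ^+ 2 - Sv)
      - 2 * (eta * (th2 a * Vl a ^+ 2)) + th3 a * Vl a ^+ 3)); first exact: sum_alg.
move=> a _; rewrite (_ : th2 a * (2 * Vl a * Ac a) = 2 * Vl a * (th2 a * Ac a)); last by ring.
rewrite H; by field.
Qed.

Lemma norm_le_entries (R : realType) n (d : 'rV[R]_n) (r : R) :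
  0 <= r -> (forall a, `|d ord0 a| <= r) -> `|d| <= r.
Proof.
move=> r0 H; rewrite [leLHS]/Num.Def.normr/= mx_normrE.
by apply: bigmax_le => // -[i k] _ /=; rewrite [i]ord1.
Qed.

Unset Implicit Arguments.
Set Strict Implicit.
Theorem lemma4p3 (R : realType) (n : nat) (hn : (1 <= n)%N)
  (theta : R -> R) (theta0 : \bar R) (Phi : 'rV[R]_(n.+1) -> R)
  (O : set 'rV[R]_(n.+1)) (eta : R) (x : R -> 'rV[R]_(n.+1))
  (xw : 'rV[R]_(n.+1)) (U : set 'rV[R]_(n.+1)) :
  is_kernel theta theta0 ->
  open O -> @simplex R n `<=` O -> Smooth_on_set O Phi -> Lipschitz_on_set O Phi ->
  0 < eta ->
  interior_ID_solution theta Phi eta x ->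
  omega_limit_point x xw ->
  nbhs_in_simplex xw U ->
  forall T : R, 0 < T ->
  exists a b : R, [/\ 0 <= a, T <= b - a &
                      forall t, a <= t <= b -> U (x t)].
Proof.
move=> [_ dth _ _ [th2pos th3neg]] oO sO [sP sC] [L HL] eta0
  [Xint [dx [ddx IDeq]]] [tn [tninf xtn]] [V [nV VU]] T T0.
set th2 := dern 2 theta.
set th3 := dern 3 theta.
have dP : forall z a, O z -> derivable Phi z (delta_mx 0 a) := fun z a Oz => sP [::] a z Oz.
have cP : forall a, {in O, continuous (fun z => 'D_(delta_mx 0 a) Phi z)}.
  by move=> a; rewrite -continuous_open_subspace //; exact: (sC [:: a]).
have th2d (u : R) : 0 < u -> is_derive u (1 : R) th2 (th3 u).
  by move=> hu; split; [exact: dth 2 u hu | rewrite -derive1E].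
have Xpos (t : R) a : 0 <= t -> 0 < x t ord0 a by move=> ht; exact: (Xint t ht).1.
have Xle1 (t : R) a : 0 <= t -> x t ord0 a <= 1.
  move=> ht; rewrite -(Xint t ht).2 (bigD1 a) //= lerDl.
  by apply: sumr_ge0 => b _; apply: ltW; apply: Xpos.
have Osimp (t : R) : 0 <= t -> O (x t).
  move=> ht; apply: sO; split; last exact: (Xint t ht).2.
  by move=> a; apply: ltW; apply: Xpos.
have th2mono (u : R) : 0 < u -> u <= 1 -> th2 1 <= th2 u.
  move=> u0 u1.
  apply: (@ler0_derive1_nincr _ th2 u 1) => //.
  - move=> s; rewrite in_itv /= => /andP[us _]; exact: dth 2 s (lt_trans u0 us).
  - move=> s; rewrite in_itv /= => /andP[us _]; exact: ltW (th3neg s (lt_trans u0 us)).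
  - apply: cont_from_derive => s; rewrite in_itv /= => /andP[us _].
    exact: dth 2 s (lt_le_trans u0 us).
set c := th2 1.
have c0 : 0 < c by apply: th2pos.
have dX (t : R) a : 0 < t -> is_derive t (1 : R) (fun s => x s ord0 a) (derive1 x t ord0 a).
  by move=> ht; apply: comp_entry; apply: dx.
have dV (t : R) a : 0 < t -> is_derive t (1:R) (fun s => derive1 x s ord0 a) (derive1 (derive1 x) t ord0 a).
  by move=> ht; apply: comp_entry; apply: ddx.
have V0 (t : R) : 0 < t -> \sum_a derive1 x t ord0 a = 0.
  move=> ht.
  have h1 : is_derive t 1 (fun s => \sum_a x s ord0 a) (\sum_a derive1 x t ord0 a).
    apply: is_derive_ext (is_derive_sum (h := fun a s => x s ord0 a)
       (dh := fun a => derive1 x t ord0 a) (fun a => dX t a ht)) => s.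
    by rewrite fct_sumE.
  have h2 : is_derive t 1 (fun s => \sum_a x s ord0 a) 0.
    apply: (near_eq_is_derive _ (is_derive_cst (1:R) t (1:R))).
    by apply: filterS (near_pos ht) => s hs; rewrite /= (Xint s (ltW hs)).2.
  by case: h1 => _ <-; case: h2.
pose E := fun s : R => 2^-1 * (\sum_a th2 (x s ord0 a) * (derive1 x s ord0 a) ^+ 2) - Phi (x s).
have dE (t : R) : 0 < t ->
    is_derive t (1:R) E (- eta * \sum_a th2 (x t ord0 a) * derive1 x t ord0 a ^+ 2).
  move=> ht.
  have dA a : is_derive t (1:R) (fun s => th2 (x s ord0 a) * derive1 x s ord0 a ^+ 2)
     (th2 (x t ord0 a) * (2 * derive1 x t ord0 a * derive1 (derive1 x) t ord0 a)
      + derive1 x t ord0 a ^+ 2 * (th3 (x t ord0 a) * derive1 x t ord0 a)).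
    have h1 := is_derive1_comp (th2d _ (Xpos t a (ltW ht))) (dX t a ht).
    have h2 := is_deriveX 2 (dV t a ht).
    have h3 := is_deriveM h1 h2.
    apply: is_derive_ext (is_derive_val _ h3) => [s|].
      by rewrite /= expr2.
    have -> : ((fun s => derive1 x s ord0 a) ^+ 2) t = derive1 x t ord0 a ^+ 2.
      by rewrite /= expr2.
    change (th2 (x t ord0 a) * ((2 * derive1 x t ord0 a ^+ 1) * derive1 (derive1 x) t ord0 a)
      + derive1 x t ord0 a ^+ 2 * (th3 (x t ord0 a) * derive1 x t ord0 a) =
      th2 (x t ord0 a) * (2 * derive1 x t ord0 a * derive1 (derive1 x) t ord0 a)
      + derive1 x t ord0 a ^+ 2 * (th3 (x t ord0 a) * derive1 x t ord0 a)).
    rewrite expr1; ring.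
  have dS := is_derive_sum dA.
  have dZ := is_deriveZ 2^-1 dS.
  have dPh := chain_Phi oO (Osimp t (ltW ht)) dP cP (dx t ht).
  have dB := is_deriveB dZ dPh.
  apply: is_derive_ext (is_derive_val _ dB) => [s|].
    by rewrite /E /= fct_sumE.
  rewrite -derive1E.
  pose Th2 := (\sum_b (th2 (x t ord0 b))^-1)^-1.
  pose Av := \sum_b Th2 / th2 (x t ord0 b) * coord_partial b Phi (x t).
  pose Sv := \sum_b Th2 / th2 (x t ord0 b) * th3 (x t ord0 b) * (derive1 x t ord0 b) ^+ 2.
  apply: (@sum_alg' R n.+1 (fun a => derive1 x t ord0 a) (fun a => 'D_(delta_mx 0 a) Phi (x t))
     (fun a => th2 (x t ord0 a)) (fun a => th3 (x t ord0 a))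
     (fun a => derive1 (derive1 x) t ord0 a) Av Sv eta (V0 t ht)) => a.
  rewrite IDeq // /ID_rhs /= alg_ID //; last by apply: lt0r_neq0; apply: th2pos; apply: Xpos; apply: ltW.
have Enoninc (s t : R) : 0 < s -> s <= t -> E t <= E s.
  move=> s0 st.
  apply: (@ler0_derive1_nincr _ E s t) => //.
  - move=> u; rewrite in_itv /= => /andP[su _].
    by case: (dE u (lt_trans s0 su)).
  - move=> u; rewrite in_itv /= => /andP[su _].
    rewrite derive1E; have [_ ->] := dE u (lt_trans s0 su).
    rewrite mulNr oppr_le0; apply: mulr_ge0; first exact: ltW.
    apply: sumr_ge0 => b _; apply: mulr_ge0; last exact: sqr_ge0.
    by apply: ltW; apply: th2pos; apply: Xpos; apply: ltW; apply: lt_trans s0 su.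
  - apply: cont_from_derive => u; rewrite in_itv /= => /andP[su _].
    by case: (dE u (lt_le_trans s0 su)).
have dx1 (t s : R) : 0 <= t -> 0 <= s -> `|x t - x s| <= 1.
  move=> t0 s0; apply: norm_le_entries => // a; rewrite !mxE.
  have := Xpos t a t0; have := Xpos s a s0; have := Xle1 t a t0; have := Xle1 s a s0.
  rewrite ler_norml; move=> *; apply/andP; split; lra.
set B := `|Phi (x 0)| + `|L|.
have Elow (t : R) : 0 <= t -> - B <= E t.
  move=> t0.
  have K0 : 0 <= 2^-1 * (\sum_a th2 (x t ord0 a) * (derive1 x t ord0 a) ^+ 2).
    apply: mulr_ge0 => //; apply: sumr_ge0 => b _; apply: mulr_ge0; last exact: sqr_ge0.
    by apply: ltW; apply: th2pos; apply: Xpos.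
  have HL0 := HL (x t) (x 0) (Osimp t t0) (Osimp 0 (lexx 0)).
  have h1 : L * `|x t - x 0| <= `|L|.
    apply: le_trans (ler_wpM2r (normr_ge0 _) (ler_norm L)) _.
    rewrite -[leRHS]mulr1; apply: ler_wpM2l => //; exact: dx1.
  have h2 : Phi (x t) <= B.
    have := le_trans HL0 h1; rewrite /B ler_norml => /andP[_ h].
    have := ler_norm (Phi (x 0)); lra.
  rewrite /E; lra.
have coord (tau s t : R) a : 0 < tau -> 0 < s -> s <= t ->
    (x t ord0 a - x s ord0 a) ^+ 2 <= tau / (eta * c) * (E s - E t) + (t - s) / tau.
  move=> tau0 s0 st.
  set k := tau / (eta * c).
  pose G := fun u : R => (x u ord0 a - x s ord0 a) ^+ 2 + k * E u - tau^-1 * u.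
  have dG (u : R) : 0 < u -> is_derive u (1:R) G
      ((2 * (x u ord0 a - x s ord0 a) ^+ 1) * (derive1 x u ord0 a - 0)
       + k * (- eta * \sum_b th2 (x u ord0 b) * derive1 x u ord0 b ^+ 2) - tau^-1 * 1).
    move=> u0.
    have hA := is_deriveX 2 (is_deriveB (dX u a u0) (is_derive_cst (x s ord0 a) u (1:R))).
    have hB := is_deriveZ k (dE u u0).
    have hC := is_deriveZ (tau^-1) (is_derive_id u (1:R)).
    have hG := is_deriveB (is_deriveD hA hB) hC.
    apply: is_derive_ext hG => r.
    by rewrite /G /= expr2.
  have dGle (u : R) : s < u -> derive1 G u <= 0.
    move=> su; have u0 : 0 < u := lt_trans s0 su.
    rewrite derive1E; have [_ ->] := dG u u0.
    set d := x u ord0 a - x s ord0 a.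
    set W := derive1 x u ord0 a.
    set Sg := \sum_b th2 (x u ord0 b) * derive1 x u ord0 b ^+ 2.
    have d1 : d ^+ 2 <= 1.
      have := Xpos u a (ltW u0); have := Xpos s a (ltW s0).
      have := Xle1 u a (ltW u0); have := Xle1 s a (ltW s0).
      rewrite /d => *; nra.
    have Sg1 : th2 (x u ord0 a) * W ^+ 2 <= Sg.
      rewrite /Sg (bigD1 a) //= lerDl; apply: sumr_ge0 => b _.
      apply: mulr_ge0; last exact: sqr_ge0.
      by apply: ltW; apply: th2pos; apply: Xpos; apply: ltW.
    have Sg2 : c * W ^+ 2 <= th2 (x u ord0 a) * W ^+ 2.
      apply: ler_wpM2r; first exact: sqr_ge0.
      by apply: th2mono; [apply: Xpos; apply: ltW|apply: Xle1; apply: ltW].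
    have kk : k * (eta * c) = tau by rewrite /k; field; apply/andP; split; apply: lt0r_neq0.
    have F1 : tau * W ^+ 2 <= k * (eta * Sg).
      rewrite -kk -mulrA; apply: ler_wpM2l; first by rewrite /k; apply: divr_ge0; apply: ltW => //; apply: mulr_gt0.
      rewrite -mulrA; apply: ler_wpM2l; first exact: ltW.
      exact: le_trans Sg2 Sg1.
    have F2 : 2 * d * W <= tau^-1 + tau * W ^+ 2.
      have h : 0 <= tau^-1 * (tau * W - d) ^+ 2 by apply: mulr_ge0; [rewrite invr_ge0 ltW|apply: sqr_ge0].
      have e1 : tau^-1 * (tau * W - d) ^+ 2 = tau * W ^+ 2 - 2 * d * W + tau^-1 * d ^+ 2.
        by field; apply: lt0r_neq0.
      have e2 : tau^-1 * d ^+ 2 <= tau^-1 by rewrite -[leRHS]mulr1; apply: ler_wpM2l; [rewrite invr_ge0; exact: ltW | exact: d1].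
      lra.
    rewrite expr1 subr0; lra.
  have Hmono : G t <= G s.
    apply: (@ler0_derive1_nincr _ G s t) => //.
    - move=> u; rewrite in_itv /= => /andP[su _].
      by case: (dG u (lt_trans s0 su)).
    - by move=> u; rewrite in_itv /= => /andP[su _]; apply: dGle.
    - apply: cont_from_derive => u; rewrite in_itv /= => /andP[su _].
      by case: (dG u (lt_le_trans s0 su)).
  move: Hmono; rewrite /G subrr expr0n /= add0r => Hm.
  have -> : (t - s) / tau = tau^-1 * t - tau^-1 * s by field; apply: lt0r_neq0.
  lra.
pose Es := E @` [set t : R | 1 <= t].
have Es_inf : has_inf Es.
  split; first by exists (E 1); exists 1 => //=.
  exists (- B) => y [t t1 <-]; apply: Elow; rewrite /= in t1; lra.
move/nbhs_ballP: nV => -[eps0 /= eps00 Heps].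
set eps := eps0 / 2.
have eps_gt0 : 0 < eps by rewrite /eps; lra.
set tau := 2 * T / eps ^+ 2.
have tau0 : 0 < tau by rewrite /tau; apply: divr_gt0; [lra|apply: exprn_gt0].
have ec0 : 0 < eta * c by apply: mulr_gt0.
set gam := eps ^+ 2 * (eta * c) / (2 * tau).
have gam0 : 0 < gam by rewrite /gam; apply: divr_gt0; [apply: mulr_gt0 => //; apply: exprn_gt0|lra].
have [y [S S1 <-] ESm] := inf_adherent gam0 Es_inf.
have Hev : \forall m \near \oo, S <= tn m /\ `|xw - x (tn m)| < eps.
  near=> m; split.
    by near: m; move/cvgryPge: tninf; apply.
  by near: m; move/cvgrPdist_lt: xtn; apply.
have [m0 [Sm0 xm0]] : exists m, S <= tn m /\ `|xw - x (tn m)| < eps.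
  by case: Hev => N _ HN; exists N; apply: HN => /=.
set s := tn m0.
rewrite /= in S1.
have s1 : 1 <= s by rewrite /s; lra.
exists s, (s + T); split; [lra|lra|].
move=> t /andP[st tsT].
have Es_le : E s <= E S by apply: Enoninc; [lra | rewrite /s; lra]. 
have EsT : inf Es <= E (s + T) by apply: ge_inf; [case: Es_inf | exists (s + T); [rewrite /=; lra | by []]].
have EtT : E (s + T) <= E t by apply: Enoninc; lra.
have Hc a : `|x t ord0 a - x s ord0 a| <= eps.
  have h := coord tau s t a tau0 (lt_le_trans ltr01 s1) st.
  have k0 : 0 <= tau / (eta * c) by apply: divr_ge0; apply: ltW.
  have hk : tau / (eta * c) * (E s - E t) <= tau / (eta * c) * gam.
    by apply: ler_wpM2l => //; lra.
  have kg : tau / (eta * c) * gam = eps ^+ 2 / 2.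
    by rewrite /gam; field; rewrite (gt_eqF tau0) (gt_eqF c0) (gt_eqF eta0).
  have ht : (t - s) / tau <= T / tau.
    by apply: ler_wpM2r; [rewrite invr_ge0; exact: ltW | lra].
  have Tt : T / tau = eps ^+ 2 / 2.
    by rewrite /tau; field; rewrite (gt_eqF eps_gt0) (gt_eqF T0).
  have hsq : (x t ord0 a - x s ord0 a) ^+ 2 <= eps ^+ 2 by lra.
  rewrite ler_norml; apply/andP; split; nra.
have Hts : `|x s - x t| <= eps.
  apply: norm_le_entries; first exact: ltW.
  by move=> a; rewrite !mxE distrC.
have t0 : 0 <= t by lra.
apply: VU; split; last first.
  split; last exact: (Xint t t0).2.
  by move=> a; apply: ltW; apply: Xpos.
apply: Heps; rewrite -ball_normE /ball_ /=.
have -> : xw - x t = (xw - x s) + (x s - x t) by rewrite addrA subrK.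
apply: le_lt_trans (ler_normD _ _) _.
rewrite /eps in xm0 Hts; rewrite /s in Hts; lra.
Unshelve. all: by end_near.
Qed.
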